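(* Let $g>\tfrac12$, $M_{\mathrm{I}},M_{\mathrm{II}}\in\mathbb{Z}_{\ge0}$, $M=M_{\mathrm{I}}+M_{\mathrm{II}}$, $M'=\frac12(M_{\mathrm{I}}-M_{\mathrm{II}})$, let $\mathcal{D}=((d_1,t_1),\ldots,(d_M,t_M))$ be an ordered list of pairwise distinct seed labels as in the context with $M_{\mathrm{I}}$ of Type I and $M_{\mathrm{II}}$ of Type II, and let $n\in\mathbb{Z}_{\ge0}$. For a seed label $(\mathrm{v},t)$ set $\xi_{(\mathrm{v},\mathrm{I})}(\eta)=L^{(g-\frac12)}_{\mathrm{v}}(-\eta)$, $\xi_{(\mathrm{v},\mathrm{II})}(\eta)=L^{(\frac12-g)}_{\mathrm{v}}(\eta)$, $\tilde{\mathcal{E}}_{(\mathrm{v},\mathrm{I})}=-4(g+\mathrm{v}+\frac12)$, $\tilde{\mathcal{E}}_{(\mathrm{v},\mathrm{II})}=-4(g-\mathrm{v}-\frac12)$, $\tilde\zeta_{(\mathrm{v},\mathrm{I})}(\eta)=2\eta L^{(g+\frac12)}_{\mathrm{v}}(-\eta)$, $\tilde\zeta_{(\mathrm{v},\mathrm{II})}(\eta)=-2(g-\frac12-\mathrm{v})L^{(-g-\frac12)}_{\mathrm{v}}(\eta)$, and set $\mathcal{E}_n=4n$, $\zeta_n(\eta)=-2\eta L^{(g+\frac12)}_{n-1}(\eta)$. Define the $(M+1)\times(M+1)$ matrix $(a_{j,k})$ by: for $1\le k\le M$, $a_{2l-1,k}=(-\tilde{\mathcal{E}}_{(d_k,t_k)})^{l-1}\xi_{(d_k,t_k)}(\eta)$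 and $a_{2l,k}=(-\tilde{\mathcal{E}}_{(d_k,t_k)})^{l-1}\tilde\zeta_{(d_k,t_k)}(\eta)$; and $a_{2l-1,M+1}=(-\mathcal{E}_n)^{l-1}L^{(g-\frac12)}_n(\eta)$, $a_{2l,M+1}=(-\mathcal{E}_n)^{l-1}\zeta_n(\eta)$ (for $1\le l\le[\frac{M+2}{2}]$ in odd rows and $1\le l\le[\frac{M+1}{2}]$ in even rows). Define the $M\times M$ matrix $(b_{j,k})$ by $b_{2l-1,k}=(-\tilde{\mathcal{E}}_{(d_k,t_k)})^{l-1}\xi_{(d_k,t_k)}(\eta)$, $1\le l\le[\frac{M+1}{2}]$, and $b_{2l,k}=(-\tilde{\mathcal{E}}_{(d_k,t_k)})^{l-1}\tilde\zeta_{(d_k,t_k)}(\eta)$, $1\le l\le[\frac M2]$. Then for $\eta>0$, $$P_{\mathcal{D},n}(\eta)=2^{-\frac12M(M+1)}\det(a_{j,k})_{1\le j,k\le M+1}\;\eta^{-([M']+1)([M']+M-2[\frac M2])},$$ $$\Xi_{\mathcal{D}}(\eta)=2^{-\frac12M(M-1)}\det(b_{j,k})_{1\le j,k\le M}\;\eta^{-[M']([M']+M-2[\frac M2])}.$$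
   Context: $[a]$ denotes the greatest integer not exceeding $a$, and $[a]'$ the greatest integer strictly less than $a$. $(a)_k=a(a+1)\cdots(a+k-1)$, $(a)_0=1$. For real $\alpha$ and $m\in\mathbb{Z}_{\ge0}$, $L^{(\alpha)}_m(\eta)=\frac{1}{m!}\sum_{k=0}^m\frac{(-m)_k}{k!}(\alpha+k+1)_{m-k}\eta^k$, and $L^{(\alpha)}_m\equiv0$ for $m<0$. Fix $g>\frac12$. A seed label is a pair $(\mathrm{v},t)$ with $t\in\{\mathrm{I},\mathrm{II}\}$, $\mathrm{v}\in\mathbb{Z}_{\ge0}$ if $t=\mathrm{I}$ and $\mathrm{v}\in\{0,1,\ldots,[g-\frac12]'\}$ if $t=\mathrm{II}$. For $\eta>0$ let $\mu_{(\mathrm{v},\mathrm{I})}(\eta)=e^{\eta}L^{(g-\frac12)}_{\mathrm{v}}(-\eta)$, $\mu_{(\mathrm{v},\mathrm{II})}(\eta)=\eta^{\frac12-g}L^{(\frac12-g)}_{\mathrm{v}}(\eta)$, $P_n(\eta)=L^{(g-\frac12)}_n(\eta)$, and $\mathrm{W}[f_1,\ldots,f_m](\eta)=\det\big(\frac{d^{j-1}f_k}{d\eta^{j-1}}\big)_{1\le j,k\le m}$. For $\mathcal{D}$ as in the claim, $\Xi_{\mathcal{D}}(\eta)=\mathrm{W}[\mu_{(d_1,t_1)},\ldots,\mu_{(d_M,t_M)}](\eta)\,\eta^{(M_{\mathrm{I}}+g-\frac12)M_{\mathrm{II}}}e^{-M_{\mathrm{I}}\eta}$ and $P_{\mathcal{D},n}(\eta)=\mathrm{W}[\mu_{(d_1,t_1)},\ldots,\mu_{(d_M,t_M)},P_n](\eta)\,\eta^{(M_{\mathrm{I}}+g+\frac12)M_{\mathrm{II}}}e^{-M_{\mathrm{I}}\eta}$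 (the multi-indexed Laguerre polynomials). *)

(* Defs.v *)
From HB Require Import structures.
From mathcomp Require Import all_boot all_order all_algebra.
From mathcomp Require Import all_classical all_reals all_analysis.
Set Implicit Arguments. Unset Strict Implicit. Unset Printing Implicit Defensive.
Import Order.TTheory GRing.Theory Num.Theory.
Import numFieldNormedType.Exports.
Local Open Scope ring_scope.

Section Defs.
Variable R : realType.

Definition poch (a : R) (k : nat) : R := \prod_(i < k) (a + i%:R).

Definition laguerre (alpha : R) (m : int) (x : R) : R :=
  match m with
  | Posz m' => (m'`!%:R)^-1 *
      \sum_(k < m'.+1) (poch (- m'%:R) k / (k`!%:R)) *
                       poch (alpha + k%:R + 1) (m' - k) * x ^+ k
  | Negz _ => 0
  end.

(* Seed label (v, t): t = true means Type I, t = false means Type II *)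
Definition label := (nat * bool)%type.

(* validity: Type II requires v <= [g - 1/2]', i.e. v < g - 1/2 *)
Definition valid_label (g : R) (l : label) : bool :=
  l.2 || (l.1%:R < g - 2^-1).

Definition mu (g : R) (l : label) : R -> R :=
  if l.2 then fun x => expR x * laguerre (g - 2^-1) l.1 (- x)
  else fun x => powR x (2^-1 - g) * laguerre (2^-1 - g) l.1 x.

Definition Pn (g : R) (n : nat) : R -> R := fun x => laguerre (g - 2^-1) n x.

Definition wronskian (fs : seq (R -> R)) (x : R) : R :=
  \det (\matrix_(j < size fs, k < size fs)
          derive1n j (nth (fun _ => 0) fs k) x).

Definition countI (D : seq label) : nat := count (fun l : label => l.2) D.
Definition countII (D : seq label) : nat := count (fun l : label => ~~ l.2) D.

Definition Xi (g : R) (D : seq label) (x : R) : R :=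
  wronskian (map (mu g) D) x
  * powR x (((countI D)%:R + g - 2^-1) * (countII D)%:R)
  * expR (- ((countI D)%:R * x)).

Definition PDn (g : R) (D : seq label) (n : nat) (x : R) : R :=
  wronskian (rcons (map (mu g) D) (Pn g n)) x
  * powR x (((countI D)%:R + g + 2^-1) * (countII D)%:R)
  * expR (- ((countI D)%:R * x)).

Definition xi (g : R) (l : label) (x : R) : R :=
  if l.2 then laguerre (g - 2^-1) l.1 (- x) else laguerre (2^-1 - g) l.1 x.

Definition Etil (g : R) (l : label) : R :=
  if l.2 then - 4 * (g + l.1%:R + 2^-1) else - 4 * (g - l.1%:R - 2^-1).

Definition zetatil (g : R) (l : label) (x : R) : R :=
  if l.2 then 2 * x * laguerre (g + 2^-1) l.1 (- x)
  else - 2 * (g - 2^-1 - l.1%:R) * laguerre (- g - 2^-1) l.1 x.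

Definition En (n : nat) : R := 4 * n%:R.
Definition zetan (g : R) (n : nat) (x : R) : R :=
  - 2 * x * laguerre (g + 2^-1) (n%:Z - 1) x.

(* entry in 0-based row i: row i+1 (1-based) is odd iff i even;
   rows 2l-1 and 2l both carry power l-1 = i./2 *)
Definition amat (g : R) (D : seq label) (n : nat) (x : R)
  : 'M[R]_((size D).+1) :=
  \matrix_(i < (size D).+1, k < (size D).+1)
    if (k < size D)%N then
      let l := nth (0%N, true) D k in
      (- Etil g l) ^+ (i./2) * (if odd i then zetatil g l x else xi g l x)
    else
      (- En n) ^+ (i./2) * (if odd i then zetan g n x else laguerre (g - 2^-1) n x).

Definition bmat (g : R) (D : seq label) (x : R) : 'M[R]_(size D) :=
  \matrix_(i < size D, k < size D)
    let l := nth (0%N, true) D k in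
    (- Etil g l) ^+ (i./2) * (if odd i then zetatil g l x else xi g l x).

End Defs.

(* Main.v *)
Require Import Defs.
From HB Require Import structures.
From mathcomp Require Import all_boot all_order all_algebra.
From mathcomp Require Import all_classical all_reals all_analysis.
From mathcomp Require Import zify ring lra.
Import Order.TTheory GRing.Theory Num.Theory.
Import numFieldNormedType.Exports.
Local Open Scope ring_scope.

Section DetRec.
Variable (F : fieldType) (x al : F).

Fixpoint cc (j : nat) : nat -> F :=
  match j with
  | 0 => fun i => (i == 0)%:R
  | S jj => match jj with
           | 0 => fun i => (i == 1)%:R
           | S j' => fun i => x^-1 * (j'%:R * cc j' i
                 - (if (2 <= i)%N then cc j' (i - 2) else 0)
                 - (j'%:R + al + 1 - x) * cc jj i)
           end
  end.

Lemma ccSS j i : cc j.+2 i = x^-1 * (j%:R * cc j i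
                 - (if (2 <= i)%N then cc j (i - 2) else 0)
                 - (j%:R + al + 1 - x) * cc j.+1 i).
Proof. by []. Qed.

Lemma cc_gt_pair j : (forall i, (j < i)%N -> cc j i = 0) /\
                     (forall i, (j.+1 < i)%N -> cc j.+1 i = 0).
Proof.
elim: j => [|j [IH1 IH2]].
  by split => -[|[|i]] hi //=; rewrite mulr0n.
split=> // i hi; rewrite ccSS IH1 ?IH2; [|lia|lia].
case: ifP => h2; last by rewrite !mulr0 !subr0 mulr0.
rewrite IH1; last by lia.
by rewrite !mulr0 !subr0 mulr0.
Qed.

Lemma cc_gt j i : (j < i)%N -> cc j i = 0.
Proof. exact: (cc_gt_pair j).1. Qed.

Lemma cc_diag j : cc j j = (- x^-1) ^+ (j./2).
Proof.
have: cc j j = (- x^-1) ^+ (j./2) /\ cc j.+1 j.+1 = (- x^-1) ^+ (j.+1./2).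
  elim: j => [|j [IH1 IH2]]; first by split; rewrite /= ?eqxx ?expr0.
  split => //.
  rewrite ccSS (@cc_gt j j.+2) ?(@cc_gt j.+1 j.+2) //=.
  have -> : (j.+2 - 2 = j)%N by lia.
  rewrite IH1 /= exprS; ring.
by case.
Qed.

Variable (lam : F) (dd : nat -> F).
Hypothesis xn0 : x != 0.
Hypothesis rec : forall j, x * dd j.+2 + (j%:R + al + 1 - x) * dd j.+1
                   + (lam - j%:R) * dd j = 0.

Definition BB i := lam ^+ (i./2) * (if odd i then dd 1 else dd 0).

Lemma BB2 i : BB i.+2 = lam * BB i.
Proof. by rewrite /BB /= negbK exprS mulrA. Qed.

Lemma expand_pair j : (forall S, (j < S)%N -> dd j = \sum_(i < S) cc j i * BB i) /\
   (forall S, (j.+1 < S)%N -> dd j.+1 = \sum_(i < S) cc j.+1 i * BB i).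
Proof.
elim: j => [|j [IH1 IH2]].
  split=> [] [|[|S]] //= _.
  - by rewrite big_ord_recl /= mul1r /BB /= mul1r big1 ?addr0 // => i _; rewrite mul0r.
  - by rewrite big_ord_recl /= mul1r /BB /= mul1r big1 ?addr0 // => i _; rewrite mul0r.
  - rewrite big_ord_recl /= mul0r add0r big_ord_recl /= mul1r /BB /= mul1r.
    by rewrite big1 ?addr0 // => i _; rewrite mul0r.
split=> // S hS.
have Hsh : \sum_(i < S) (if (2 <= i)%N then cc j (i - 2) else 0) * BB i = lam * dd j.
  case: S hS => [|[|S]] // hS.
  rewrite big_ord_recl /= mul0r add0r big_ord_recl /= mul0r add0r.
  rewrite (IH1 S) ?mulr_sumr; last by lia.
  apply: eq_bigr => i _; rewrite /bump /=.
  have -> : (i.+2 - 2 = i)%N by lia.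
  by rewrite BB2 mulrCA.
have e : dd j.+2 = x^-1 * (j%:R * dd j - lam * dd j - (j%:R + al + 1 - x) * dd j.+1).
  apply: (mulfI xn0); rewrite mulrA mulfV // mul1r.
  by rewrite -[LHS]subr0 -(rec j); ring.
rewrite e -Hsh (IH1 S) ?(IH2 S); try lia.
rewrite [RHS](eq_bigr (fun i : 'I_S => x^-1 * (j%:R * (cc j i * BB i)
   - ((if (2 <= i)%N then cc j (i - 2) else 0) * BB i)
   - (j%:R + al + 1 - x) * (cc j.+1 i * BB i)))); last by move=> i _; rewrite ccSS; ring.
by rewrite -mulr_sumr !sumrB -!mulr_sumr.
Qed.

End DetRec.

Lemma det_rec (F : fieldType) (x al : F) N (lam : 'I_N -> F) (dd : 'I_N -> nat -> F) :
  x != 0 ->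
  (forall k j, x * dd k j.+2 + (j%:R + al + 1 - x) * dd k j.+1 + (lam k - j%:R) * dd k j = 0) ->
  \det (\matrix_(j < N, k < N) dd k j) =
  (\prod_(j < N) (- x^-1) ^+ (j./2)) *
  \det (\matrix_(j < N, k < N) (lam k ^+ (j./2) * (if odd j then dd k 1%N else dd k 0%N))).
Proof.
move=> xn0 rec.
have -> : \matrix_(j < N, k < N) dd k j = (\matrix_(j < N, i < N) cc F x al j i : 'M[F]_N) *m (\matrix_(i < N, k < N) (lam k ^+ (i./2) * (if odd i then dd k 1%N else dd k 0%N))).
  apply/matrixP => j k; rewrite !mxE.
  rewrite ((@expand_pair F x al (lam k) (dd k) xn0 (rec k) j).1 N (ltn_ord j)).
  by apply: eq_bigr => i _; rewrite !mxE.
rewrite det_mulmx det_trig; last by apply/is_trig_mxP => i j h; rewrite mxE (@cc_gt F x al).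
by congr (_ * _); apply: eq_bigr => j _; rewrite mxE (@cc_diag F x al).
Qed.

Lemma det_scale_rc (F : comNzRingType) N (r c : 'I_N -> F) (A : 'M[F]_N) :
  \det (\matrix_(j < N, k < N) (r j * A j k * c k)) =
  (\prod_(j < N) r j) * (\prod_(k < N) c k) * \det A.
Proof.
have -> : \matrix_(j < N, k < N) (r j * A j k * c k) =
   diag_mx (\row_j r j) *m A *m diag_mx (\row_k c k).
  by apply/matrixP => j k; rewrite mul_mx_diag mul_diag_mx !mxE.
rewrite !det_mulmx !det_diag; rewrite mulrAC; congr (_ * _ * _);
  by apply: eq_bigr => i _; rewrite mxE.
Qed.

Set Implicit Arguments. Unset Strict Implicit.


Section Lag.
Variable R : realType.
Implicit Types (a al be : R).

Lemma pochS a m : poch a m.+1 = a * poch (a + 1) m.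
Proof.
rewrite /poch big_ord_recl /= addr0; congr (_ * _); apply: eq_bigr => i _.
rewrite /bump /= add1n -addn1 natrD; ring.
Qed.

Lemma pochSr a m : poch a m.+1 = poch a m * (a + m%:R).
Proof. by rewrite /poch big_ord_recr. Qed.

Lemma poch_gt m k : (m < k)%N -> poch (- (m%:R) : R) k = 0.
Proof.
move=> h; rewrite /poch (bigD1 (Ordinal h)) //=.
by rewrite addrC subrr mul0r.
Qed.

Definition lc al (m k : nat) : R :=
  poch (- m%:R) k * poch (al + k%:R + 1) (m - k) / (k`!%:R * m`!%:R).

Lemma lc_gt al m k : (m < k)%N -> lc al m k = 0.
Proof. by move=> h; rewrite /lc poch_gt // !mul0r. Qed.

Lemma fact_neq0 k : (k`!%:R : R) != 0.
Proof. by rewrite pnatr_eq0 -lt0n fact_gt0. Qed.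

Lemma natS_neq0 k : (1 + k%:R : R) != 0.
Proof. by rewrite addrC natr1 pnatr_eq0. Qed.

Lemma lc_ode al m k :
  (k.+1%:R * (k%:R + al + 1)) * lc al m k.+1 = (k%:R - m%:R) * lc al m k.
Proof.
case: (ltnP k m) => h; last first.
  case: (ltngtP m k) h => // h' _.
  - by rewrite !lc_gt // ?mulr0 //; lia.
  - by rewrite h' subrr mul0r lc_gt ?mulr0.
have [p ->] : exists p, m = (k + p.+1)%N by exists (m - k.+1)%N; lia.
rewrite /lc.
have -> : ((k + p.+1) - k = p.+1)%N by lia.
have -> : ((k + p.+1) - k.+1 = p)%N by lia.
rewrite pochSr pochS factS natrM.
have e : (al + k%:R + 1 + 1) = al + k.+1%:R + 1 by rewrite -addn1 natrD; ring.
rewrite e.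
have := fact_neq0 k; have := fact_neq0 (k + p.+1).
have : (k.+1%:R : R) != 0 by rewrite pnatr_eq0.
move=> h1 h2 h3.
rewrite natrD /=. 
field.
by rewrite h2 h3 /= addrC natr1.
Qed.


Lemma poch0 a : poch a 0 = 1.
Proof. by rewrite /poch big_ord0. Qed.

Lemma lc_der al n k :
  k.+1%:R * lc al n.+1 k.+1 = - lc (al + 1) n k.
Proof.
rewrite /lc subSS pochS.
have -> : - (n.+1%:R) + 1 = - (n%:R : R) by rewrite -natr1; ring.
have -> : al + k.+1%:R + 1 = al + 1 + k%:R + 1 by rewrite -natr1; ring.
rewrite !factS !natrM.
have := fact_neq0 k; have := fact_neq0 n.
move=> h2 h3.
field.
by rewrite h2 h3 !natS_neq0.
Qed.

Lemma lc_shift al v k :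
  lc al v k - k.+1%:R * lc al v k.+1 = lc (al + 1) v k.
Proof.
case: (ltngtP k v) => h.
- have [p ->] : exists p, v = (k + p.+1)%N by exists (v - k.+1)%N; lia.
  rewrite /lc.
  have -> : ((k + p.+1) - k = p.+1)%N by lia.
  have -> : ((k + p.+1) - k.+1 = p)%N by lia.
  rewrite [poch (- _) k.+1]pochSr [poch (al + _ + 1) p.+1]pochS [poch (al + 1 + _ + 1) p.+1]pochSr factS natrM.
  have -> : al + k.+1%:R + 1 = al + k%:R + 1 + 1 by rewrite -natr1; ring.
  have -> : al + 1 + k%:R + 1 = al + k%:R + 1 + 1 by ring.
  have := fact_neq0 k; have := fact_neq0 (k + p.+1).
  move=> h2 h3.
  rewrite !natrD.
  field.
  by rewrite h2 h3 !natS_neq0.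
- by rewrite !lc_gt ?mulr0 ?subr0 //; lia.
- rewrite h (@lc_gt _ v v.+1) // mulr0 subr0 /lc subnn !poch0.
  by rewrite !mulr1.
Qed.

Lemma lc_lower be v k :
  (k%:R + be) * lc be v k = (v%:R + be) * lc (be - 1) v k.
Proof.
case: (ltnP v k) => h; first by rewrite !lc_gt // !mulr0.
have [p ->] : exists p, v = (k + p)%N by exists (v - k)%N; lia.
rewrite /lc.
have -> : ((k + p) - k = p)%N by lia.
have -> : be - 1 + k%:R + 1 = be + k%:R by ring.
have E1 := pochS (be + k%:R) p; have E2 := pochSr (be + k%:R) p.
rewrite E1 in E2.
have -> : ((k + p)%:R + be) * (poch (- (k + p)%:R) k * poch (be + k%:R) p / (k`!%:R * (k + p)`!%:R))
  = poch (- (k + p)%:R) k * (poch (be + k%:R) p * (be + k%:R + p%:R)) / (k`!%:R * (k + p)`!%:R).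
  by rewrite natrD; ring.
rewrite -E2; ring.
Qed.

End Lag.


Section Poly.
Variable R : realType.
Implicit Types (a b c al be s lam : R) (p q r : {poly R}).

Definition lagS s al (m : nat) : {poly R} := \poly_(k < m.+1) (s ^+ k * lc al m k).

Lemma lagS_coef s al m k : (lagS s al m)`_k = s ^+ k * lc al m k.
Proof.
rewrite coef_poly; case: ltnP => // h.
by rewrite lc_gt ?mulr0.
Qed.

Lemma laguerre_lagS al m y : laguerre al (Posz m) y = (lagS 1 al m).[y].
Proof.
rewrite /laguerre /lagS horner_poly mulr_sumr; apply: eq_bigr => k _.
rewrite expr1n mul1r /lc; field.
by rewrite !fact_neq0.
Qed.

Lemma laguerre_lagSN al m y : laguerre al (Posz m) (- y) = (lagS (-1) al m).[y].
Proof.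
rewrite /laguerre /lagS horner_poly mulr_sumr; apply: eq_bigr => k _.
rewrite /lc exprNn; field.
by rewrite !fact_neq0.
Qed.

Lemma lagS_ode s al m :
  'X * (lagS s al m)^`()^`() + ((al + 1)%:P - s%:P * 'X) * (lagS s al m)^`()
   + (s * m%:R)%:P * lagS s al m = 0.
Proof.
apply/polyP => i; rewrite coef0 !coefD mulrBl coefB -mulrA.
rewrite (coefCM (al + 1)) (coefCM s) (coefCM (s * _)).
rewrite !coefXM !coef_deriv !lagS_coef.
case: i => [|i] /=.
  apply: (@eq_trans _ _ (s ^+ 1 * ((1%:R * (0%:R + al + 1)) * lc al m 1 - (0%:R - m%:R) * lc al m 0))).
    ring.
  by rewrite lc_ode subrr mulr0.
apply: (@eq_trans _ _ (s ^+ i.+2 * ((i.+2%:R * (i.+1%:R + al + 1)) * lc al m i.+2 - (i.+1%:R - m%:R) * lc al m i.+1))).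
  rewrite !exprS; ring.
by rewrite lc_ode subrr mulr0.
Qed.



Lemma lagS_der al n : (lagS 1 al n.+1)^`() = - lagS 1 (al + 1) n.
Proof.
apply/polyP => k; rewrite coef_deriv coefN !lagS_coef !expr1n !mul1r.
by rewrite -mulr_natr mulrC lc_der.
Qed.

Lemma lagS_der0 al : (lagS 1 al 0)^`() = 0.
Proof.
apply/polyP => k; rewrite coef_deriv coef0 lagS_coef lc_gt ?mulr0 ?mul0rn //.
Qed.

Lemma lagS_shift al v :
  lagS (-1) al v + (lagS (-1) al v)^`() = lagS (-1) (al + 1) v.
Proof.
apply/polyP => k; rewrite coefD coef_deriv !lagS_coef -lc_shift exprS; ring.
Qed.

Lemma lagS_lower be v :
  be%:P * lagS 1 be v + 'X * (lagS 1 be v)^`() = (v%:R + be)%:P * lagS 1 (be - 1) v.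
Proof.
apply/polyP => k; rewrite coefD !coefCM coefXM !lagS_coef !expr1n !mul1r.
case: k => [|k] /=.
  have := lc_lower be v 0; move=> h; rewrite -h; ring.
rewrite coef_deriv lagS_coef expr1n mul1r.
have := lc_lower be v k.+1; move=> h.
rewrite -h; ring.
Qed.

End Poly.


Section Anal.
Variable R : realType.
Implicit Types (a b c al be s lam : R) (p q r : {poly R}).

Definition Fg a b q : R -> R := fun y => expR (a * y) * powR y b * q.[y].
Definition Dop a c r : {poly R} := a%:P * 'X * r + c%:P * r + 'X * r^`().

Fixpoint qs a b q (j : nat) : {poly R} :=
  match j with 0 => q | S j' => Dop a (b - j'%:R) (qs a b q j') end.

Lemma powR_pred y c : 0 < y -> powR y c = y * powR y (c - 1).
Proof.
move=> hy; have -> : powR y c = powR y ((c - 1) + 1) by rewrite subrK.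
rewrite powRD; last by apply/implyP => _; rewrite gt_eqF.
by rewrite powRr1 ?ltW // mulrC.
Qed.

Lemma is_derive_Fg a c r (y : R) : 0 < y ->
  is_derive y 1 (Fg a c r) (expR (a * y) * powR y (c - 1) * (Dop a c r).[y]).
Proof.
move=> hy.
have hg : is_derive y 1 (fun z : R => a * z) a.
  have := is_deriveM (is_derive_cst a y 1) (is_derive_id y 1).
  move=> h; refine (is_derive_eq h _).
  by rewrite /cst /GRing.scale /= mulr1 mulr0 addr0.
have hE : is_derive y 1 (fun z => expR (a * z)) (expR (a * y) * a).
  exact: (is_derive1_comp (is_derive_expR (a * y)) hg).
have hP := is_derive1_powR c hy.
have hH := is_derive_poly r y.
have := is_deriveM (is_deriveM hE hP) hH.
move=> h; refine (is_derive_eq h _).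
have -> : ((fun z : R => expR (a * z)) * (powR (R:=R))^~ c) y = expR (a*y) * powR y c by [].
rewrite /Dop !hornerE /= (powR_pred c hy).
rewrite /GRing.scale /=.
ring.
Qed.


Lemma derive1n_Fg a b q j (y : R) : 0 < y ->
  derive1n j (Fg a b q) y = Fg a (b - j%:R) (qs a b q j) y.
Proof.
elim: j y => [|j IH] y hy; first by rewrite derive1n0 subr0.
rewrite derive1nS derive1E.
rewrite (@near_eq_derive _ _ _ _ (Fg a (b - j%:R) (qs a b q j))); last first.
  near=> z; apply: IH; near: z; exact: lt_nbhsr.
rewrite (@derive_val _ _ _ _ _ _ _ (is_derive_Fg a (b - j%:R) (qs a b q j) hy)) /Fg /=.
by rewrite -natr1 opprD addrA.
Unshelve. all: by end_near.
Qed.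


Definition EqP a b al lam q j : {poly R} :=
  qs a b q j.+2 + ((j%:R + al + 1)%:P - 'X) * qs a b q j.+1
  + ((lam - j%:R)%:P * 'X) * qs a b q j.

Lemma Eq_step a b al lam q j :
  EqP a b al lam q j.+1 = Dop a (b - j.+2%:R) (EqP a b al lam q j) + EqP a b al lam q j.
Proof.
rewrite /EqP /=.
set Q := qs a b q j.
rewrite /Dop !poly.derivE.
rewrite !(polyCB, polyCD, polyC_natr, polyC1).
ring.
Qed.

Lemma Eq_all a b al lam q : EqP a b al lam q 0 = 0 -> forall j, EqP a b al lam q j = 0.
Proof.
move=> h0; elim=> [//|j IH]; rewrite Eq_step IH.
by rewrite /Dop deriv0 !mulr0 !addr0.
Qed.

End Anal.


Section Cols.
Variable R : realType.
Variable g : R.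

Definition ca (l : label) : R := if l.2 then 1 else 0.
Definition cb (l : label) : R := if l.2 then 0 else 2^-1 - g.
Definition cq (l : label) : {poly R} :=
  if l.2 then lagS (-1) (g - 2^-1) l.1 else lagS 1 (2^-1 - g) l.1.

Lemma mu_Fg l : mu g l = Fg (ca l) (cb l) (cq l).
Proof.
apply/funext => y; rewrite /mu /Fg /ca /cb /cq; case: l.2.
  by rewrite mul1r powRr0 mulr1 laguerre_lagSN.
by rewrite mul0r expR0 mul1r laguerre_lagS.
Qed.

Lemma Pn_Fg n : Pn g n = Fg 0 0 (lagS 1 (g - 2^-1) n).
Proof.
by apply/funext => y; rewrite /Pn /Fg mul0r expR0 mul1r powRr0 mul1r laguerre_lagS.
Qed.

Lemma xi_val l y : xi g l y = (cq l).[y].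
Proof. by rewrite /xi /cq; case: l.2; rewrite ?laguerre_lagSN ?laguerre_lagS. Qed.

Lemma Eq0_n n : EqP 0 0 (g - 2^-1) (En R n / 4) (lagS 1 (g - 2^-1) n) 0 = 0.
Proof.
have h4 : (4 : R) != 0 by rewrite pnatr_eq0.
have -> : En R n / 4 = n%:R by rewrite /En mulrC mulrA mulVf // mul1r.
have := lagS_ode 1 (g - 2^-1) n.
move=> h; rewrite -[RHS](mulr0 'X) -h.
rewrite /EqP /= /Dop !poly.derivE !(polyCB, polyCD, polyCM, polyCN, polyC_natr, polyC1, polyC0).
ring.
Qed.

Lemma Eq0_l l : EqP (ca l) (cb l) (g - 2^-1) (Etil g l / 4) (cq l) 0 = 0.
Proof.
have h4 : (4 : R) != 0 by rewrite pnatr_eq0.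
rewrite /ca /cb /cq /Etil; case: l => v [] /=.
  have -> : - 4 * (g + v%:R + 2^-1) / 4 = - (g - 2^-1 + v%:R + 1).
    by field.
  have := lagS_ode (-1) (g - 2^-1) v.
  move=> h; rewrite -[RHS](mulr0 'X) -h.
  rewrite /EqP /= /Dop !poly.derivE !(polyCB, polyCD, polyCM, polyCN, polyC_natr, polyC1, polyC0).
  ring.
have -> : - 4 * (g - v%:R - 2^-1) / 4 = v%:R - (g - 2^-1).
  by field.
have := lagS_ode 1 (2^-1 - g) v.
move=> h; rewrite -[RHS](mulr0 'X) -h.
rewrite /EqP /= /Dop !poly.derivE !(polyCB, polyCD, polyCM, polyCN, polyC_natr, polyC1, polyC0).
ring.
Qed.


Lemma zeta_val l y : zetatil g l y = 2 * (Dop (ca l) (cb l) (cq l)).[y].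
Proof.
rewrite /zetatil /ca /cb /cq /Dop; case: l => v []; cbn [snd].
  have -> : g + 2^-1 = (g - 2^-1) + 1 by field.
  rewrite laguerre_lagSN -lagS_shift !hornerE; ring.
have e := lagS_lower (2^-1 - g) v.
have -> : - g - 2^-1 = 2^-1 - g - 1 by field.
rewrite laguerre_lagS.
have -> : (0%:P * 'X * lagS 1 (2^-1 - g) v + (2^-1 - g)%:P * lagS 1 (2^-1 - g) v +
   'X * (lagS 1 (2^-1 - g) v)^`()) = (v%:R + (2^-1 - g))%:P * lagS 1 (2^-1 - g - 1) v.
  by rewrite -e polyC0 !mul0r add0r.
rewrite hornerCM; cbn [fst]; ring.
Qed.

Lemma zetan_val n y : zetan g n y = 2 * (Dop 0 0 (lagS 1 (g - 2^-1) n)).[y].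
Proof.
rewrite /zetan /Dop polyC0 !mul0r !add0r.
case: n => [|n].
  have -> : ((0%:Z - 1) = Negz 0)%R by []. by rewrite lagS_der0 !mulr0 horner0 mulr0.
have -> : (n.+1%:Z - 1)%R = n%:Z by rewrite -[n.+1]addn1 PoszD addrK.
have -> : g + 2^-1 = (g - 2^-1) + 1 by field.
rewrite lagS_der laguerre_lagS hornerM hornerN hornerX; ring.
Qed.

End Cols.


Section Assemble.
Variable R : realType.

Lemma rec_Fg a b al lam (q : {poly R}) (y : R) : 0 < y -> EqP a b al lam q 0 = 0 ->
  forall j : nat, y * derive1n j.+2 (Fg a b q) y + (j%:R + al + 1 - y) * derive1n j.+1 (Fg a b q) y
    + (lam - j%:R) * derive1n j (Fg a b q) y = 0.
Proof.
move=> hy h0 j.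
have E := Eq_all h0 j; rewrite /EqP in E.
rewrite !derive1n_Fg // /Fg.
have e1 : b - j.+1%:R = b - j%:R - 1 by ring.
have e2 : b - j.+2%:R = b - j%:R - 1 - 1 by ring.
rewrite e1 e2 (powR_pred (b - j%:R) hy) (powR_pred (b - j%:R - 1) hy).
move: E; move: (qs a b q j.+2) (qs a b q j.+1) (qs a b q j) => Q2 Q1 Q0 E.
move/(congr1 (fun p => p.[y])): E.
rewrite !(hornerD, hornerM, hornerN, hornerC, hornerX) ?horner0 => E.
move: E; set P := powR y _; set Ex := expR _ => E.
rewrite -[RHS](mulr0 (Ex * P * y)) -E; ring.
Qed.

Lemma wronskian_cols (fs : seq (R -> R)) (y al : R) (a b lam : nat -> R) (qq : nat -> {poly R}) :
  0 < y ->
  (forall k, (k < size fs)%N -> nth (fun=> 0) fs k = Fg (a k) (b k) (qq k)) ->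
  (forall k, (k < size fs)%N -> EqP (a k) (b k) al (lam k) (qq k) 0 = 0) ->
  wronskian fs y = (\prod_(j < size fs) (- y^-1) ^+ (j./2)) *
    \det (\matrix_(j < size fs, k < size fs) (lam k ^+ (j./2) *
       (if odd j then derive1n 1 (nth (fun=> 0) fs k) y else derive1n 0 (nth (fun=> 0) fs k) y))).
Proof.
move=> hy hF hE.
have yn0 : y != 0 by rewrite gt_eqF.
have H := @det_rec R y al (size fs) (fun k => lam k)
   (fun k j => derive1n j (nth (fun=> 0) fs k) y) yn0.
have Hr : forall (k : 'I_(size fs)) (j : nat),
   y * derive1n j.+2 (nth (fun=> 0) fs k) y + (j%:R + al + 1 - y) * derive1n j.+1 (nth (fun=> 0) fs k) y
    + (lam k - j%:R) * derive1n j (nth (fun=> 0) fs k) y = 0.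
  by move=> k j; rewrite hF //; apply: rec_Fg => //; exact: hE.
exact: (H Hr).
Qed.


Lemma assemble (fs : seq (R -> R)) (N' : nat) (A : 'M[R]_N') (y al : R)
  (a b lam E : nat -> R) (qq : nat -> {poly R}) (xiv zv : nat -> R) :
 0 < y -> size fs = N' ->
 (forall k, (k < N')%N -> nth (fun=> 0) fs k = Fg (a k) (b k) (qq k)) ->
 (forall k, (k < N')%N -> EqP (a k) (b k) al (lam k) (qq k) 0 = 0) ->
 (forall k, (k < N')%N -> lam k = E k / 4) ->
 (forall k, (k < N')%N -> xiv k = (qq k).[y]) ->
 (forall k, (k < N')%N -> zv k = 2 * (Dop (a k) (b k) (qq k)).[y]) ->
 (forall (j k : 'I_N'), A j k = (- E k) ^+ (j./2) * (if odd j then zv k else xiv k)) ->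
 wronskian fs y =
   (\prod_(j < N') ((4 * y)^-1 ^+ (j./2) * (if odd j then (2 * y)^-1 else 1))) *
   (\prod_(k < N') (expR (a k * y) * powR y (b k))) * \det A.
Proof.
move=> hy hs hF hE hl hx hz hA; subst N'.
have yn0 : y != 0 by rewrite gt_eqF.
rewrite (wronskian_cols hy hF hE).
have -> : \matrix_(j < size fs, k < size fs) (lam k ^+ (j./2) *
       (if odd j then derive1n 1 (nth (fun=> 0) fs k) y else derive1n 0 (nth (fun=> 0) fs k) y))
   = \matrix_(j < size fs, k < size fs) (((- 4^-1) ^+ (j./2) * (if odd j then (2 * y)^-1 else 1))
        * A j k * (expR (a k * y) * powR y (b k))).
  apply/matrixP => j k; rewrite !mxE hA hl // hF //.
  have hlam : (E k / 4) ^+ (j./2) = (- 4^-1) ^+ (j./2) * (- E k) ^+ (j./2).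
    by rewrite -exprMn; congr (_ ^+ _); ring.
  rewrite hlam; move: ((- 4^-1) ^+ (j./2)) ((- E k) ^+ (j./2)) => u w.
  case: (odd j).
    have d1 : derive1n 1 (Fg (a k) (b k) (qq k)) y
       = expR (a k * y) * powR y (b k - 1) * (Dop (a k) (b k) (qq k)).[y].
      by rewrite derive1n_Fg // /Fg /= subr0.
    rewrite d1 hz // (powR_pred (b k) hy).
    field; exact: yn0.
  by rewrite derive1n0 hx // /Fg; ring.
rewrite det_scale_rc !mulrA; congr (_ * _ * _).
rewrite -big_split; apply: eq_bigr => j _ /=; rewrite mulrA -exprMn; congr (_ ^+ _ * _).
by field.
Qed.

End Assemble.


Lemma SSc (N : nat) : (N./2 * N.-1./2 + N./2 = N.+1./2 * N./2)%N.
Proof.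
move: (odd_double_half N); move: (odd N) (N./2) => r m; rewrite -muln2 => <-.
rewrite -!divn2; case: r => /=; nia.
Qed.

Lemma Dl (M : nat) : (2 * (M./2 * M.-1./2) + M./2 = (M * M.-1) %/ 2)%N.
Proof.
move: (odd_double_half M); move: (odd M) (M./2) => r m; rewrite -muln2 => <-.
case: r => /=.
  have -> : ((1 + m * 2) * (1 + m * 2).-1 = 2 * ((1 + m * 2) * m))%N by rewrite /=; lia.
  rewrite mulKn //; rewrite -?divn2; nia.
case: m => [|m] //=.
have -> : ((m.+1 * 2) * (m.+1 * 2).-1 = 2 * (m.+1 * (m.+1 * 2).-1))%N by lia.
rewrite mulKn //; rewrite -?divn2; nia.
Qed.

Lemma Dl1 (M : nat) : (2 * (M.+1./2 * M.+1.-1./2) + M.+1./2 = (M * M.+1) %/ 2)%N.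
Proof. by rewrite Dl /= mulnC. Qed.

Lemma int_ident (MI MII : nat) :
  let M := (MI + MII)%N in let N := M.+1 in
  let fM : int := ((MI%:Z - MII%:Z) %/ 2)%Z in
  let c : int := fM + M%:Z - (2 * (M %/ 2)%N)%:Z in
  (((MI + 1) * MII)%N%:Z - (N./2 * N.-1./2 + N./2)%N%:Z = - ((fM + 1) * c))%R
  /\ ((MI * MII)%N%:Z - (M./2 * M.-1./2 + M./2)%N%:Z = - (fM * c))%R.
Proof.
rewrite /= -!divn2 -!subn1.
move: (odd_double_half MI) (odd_double_half MII).
move: (odd MI) (odd MII) (MI./2) (MII./2) => r s p q.
rewrite -!muln2 => <- <-.
case: r; case: s => /=; (split; nia).
Qed.


Section Final.
Variable R : realType.

Definition SS (N : nat) : nat := (\sum_(j < N) j./2)%N.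

Lemma SS_closed N : SS N = (N./2 * N.-1./2)%N.
Proof.
elim: N => [|N IH]; first by rewrite /SS big_ord0.
by rewrite /SS big_ord_recr /= -/(SS N) IH SSc mulnC.
Qed.

Lemma row_term (y : R) (h : nat) (o : bool) : y != 0 ->
  (4 * y)^-1 ^+ h * (if o then (2 * y)^-1 else 1) = (2 ^+ (2 * h + o) * y ^+ (h + o))^-1.
Proof.
move=> yn0.
have e4 : (4 : R) = 2 ^+ 2 by rewrite expr2; ring.
rewrite exprVn exprMn e4 -exprM.
case: o => /=.
  rewrite !addn1 !exprS -invfM; congr (_^-1); ring.
by rewrite !addn0 mulr1.
Qed.

Lemma row_prod (y : R) N : y != 0 ->
  \prod_(j < N) ((4 * y)^-1 ^+ (j./2) * (if odd j then (2 * y)^-1 else 1)) =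
  (2 ^+ (2 * SS N + N./2) * y ^+ (SS N + N./2))^-1.
Proof.
move=> yn0; elim: N => [|N IH].
  by rewrite big_ord0 /SS big_ord0 /= mulr1 invr1.
rewrite big_ord_recr /= IH row_term // /SS big_ord_recr /= -/(SS N) uphalf_half.
rewrite -invfM; congr (_^-1).
have -> : (2 * (SS N + N./2) + (odd N + N./2) = (2 * SS N + N./2) + (2 * N./2 + odd N))%N by lia.
have -> : (SS N + N./2 + (odd N + N./2) = (SS N + N./2) + (N./2 + odd N))%N by lia.
rewrite [2 ^+ (_ + (_ + _))]exprD [y ^+ (_ + (_ + _))]exprD.
move: (2 ^+ (2 * SS N + N./2)) (2 ^+ (2 * N./2 + odd N)) (y ^+ (SS N + N./2)) (y ^+ (N./2 + odd N)).
by move=> *; ring.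
Qed.

Lemma prodG g (D : seq label) (y : R) : 0 < y ->
  \prod_(k < size D) (expR (ca R (nth (0%N, true) D k) * y) * powR y (cb g (nth (0%N, true) D k)))
  = expR ((countI D)%:R * y) * powR y ((countII D)%:R * (2^-1 - g)).
Proof.
move=> hy; elim: D => [|l D IH].
  by rewrite big_ord0 /countI /countII /= !mul0r expR0 powRr0 mulr1.
rewrite big_ord_recl /=.
have -> : \prod_(i < size D) (expR (ca R (nth (0%N, true) (l :: D) (bump 0 i)) * y) *
      powR y (cb g (nth (0%N, true) (l :: D) (bump 0 i)))) =
   \prod_(k < size D) (expR (ca R (nth (0%N, true) D k) * y) * powR y (cb g (nth (0%N, true) D k))).
  by apply: eq_bigr => i _.
rewrite IH /countI /countII /= /ca /cb.
case: l.2 => /=.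
  by rewrite powRr0 mulr1 add0n mul1r -natr1 addrC natrD mulrDl mul1r expRD mulrA.
rewrite add0n mul0r expR0 mul1r -natr1 addrC natrD mulrDl mul1r.
rewrite [y `^ (_ + _) in RHS]powRD; last by apply/implyP => _; rewrite gt_eqF.
by rewrite mulrCA.
Qed.


End Final.

Theorem mainTheorem3 (R : realType) (g : R) (MI MII : nat) (D : seq label) (n : nat)
  (x : R) :
  2^-1 < g ->
  uniq D -> all (valid_label g) D ->
  countI D = MI -> countII D = MII ->
  0 < x ->
  let M := (MI + MII)%N in
  let fM' : int := ((MI%:Z - MII%:Z) %/ 2)%Z in
  let c : int := fM' + M%:Z - (2 * (M %/ 2)%N)%:Z in
  PDn g D n x = (2 ^+ ((M * M.+1) %/ 2))^-1 * \det (amat g D n x)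
                * x ^ (- ((fM' + 1) * c))
  /\
  Xi g D x = (2 ^+ ((M * M.-1) %/ 2))^-1 * \det (bmat g D x)
                * x ^ (- (fM' * c)).
Proof.
move=> hg huniq hall hI hII hx M fM c.
have xn0 : x != 0 by rewrite gt_eqF.
have hsz : size D = M.
  by rewrite /M -hI -hII /countI /countII -(count_predC (fun l : label => l.2)).
pose ak := fun k : nat => if (k < size D)%N then ca R (nth (0%N,true) D k) else 0.
pose bk := fun k : nat => if (k < size D)%N then cb g (nth (0%N,true) D k) else 0.
pose qk := fun k : nat => if (k < size D)%N then cq g (nth (0%N,true) D k) else lagS 1 (g - 2^-1) n.
pose lamk := fun k : nat => if (k < size D)%N then Etil g (nth (0%N,true) D k) / 4 else En R n / 4.
pose Ek := fun k : nat => if (k < size D)%N then Etil g (nth (0%N,true) D k) else En R n.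
pose xik := fun k : nat => if (k < size D)%N then xi g (nth (0%N,true) D k) x else laguerre (g - 2^-1) n x.
pose zk := fun k : nat => if (k < size D)%N then zetatil g (nth (0%N,true) D k) x else zetan g n x.
have HE : forall k, (k < (size D).+1)%N -> EqP (ak k) (bk k) (g - 2^-1) (lamk k) (qk k) 0 = 0.
  move=> k _; rewrite /ak /bk /qk /lamk; case: ifP => _; [exact: Eq0_l | exact: Eq0_n].
have HE' : forall k, (k < size D)%N -> EqP (ak k) (bk k) (g - 2^-1) (lamk k) (qk k) 0 = 0.
  by move=> k hk; apply: HE; lia.
have Hl : forall k, (k < (size D).+1)%N -> lamk k = Ek k / 4.
  by move=> k _; rewrite /lamk /Ek; case: ifP.
have Hxi : forall k, (k < (size D).+1)%N -> xik k = (qk k).[x].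
  move=> k _; rewrite /xik /qk; case: ifP => _; [exact: xi_val | exact: laguerre_lagS].
have Hz : forall k, (k < (size D).+1)%N -> zk k = 2 * (Dop (ak k) (bk k) (qk k)).[x].
  move=> k _; rewrite /zk /ak /bk /qk; case: ifP => _; [exact: zeta_val | exact: zetan_val].
have Gs : \prod_(k < size D) (expR (ak k * x) * powR x (bk k))
    = expR (MI%:R * x) * powR x (MII%:R * (2^-1 - g)).
  rewrite -hI -hII -(prodG g D hx); apply: eq_bigr => k _.
  by rewrite /ak /bk ltn_ord.
have e2 : forall A B : R, A * B = 1 -> forall z : R, z * A * B = z.
  by move=> A B h z; rewrite -mulrA h mulr1.
split.
- have W := @assemble R (rcons (map (mu g) D) (Pn g n)) (size D).+1 (amat g D n x) x (g - 2^-1)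
     ak bk lamk Ek qk xik zk hx.
  rewrite /PDn W; first last.
  + move=> j k; rewrite /amat mxE /Ek /zk /xik; by case: ifP.
  + by move=> k hk; rewrite Hz.
  + by move=> k hk; rewrite Hxi.
  + by move=> k hk; rewrite Hl.
  + by move=> k hk; rewrite HE.
  + move=> k hk; rewrite nth_rcons size_map /ak /bk /qk; case: ifP => h.
      by rewrite (nth_map (0%N, true)) // mu_Fg.
    have -> : k = size D by lia.
    by rewrite eqxx Pn_Fg.
  + by rewrite size_rcons size_map.
  rewrite row_prod // SS_closed big_ord_recr /= Gs /ak /bk ltnn mul0r expR0 powRr0 mulr1 mulr1.
  rewrite hI hII Dl1.
  rewrite (_ : ((size D * (size D).+1) %/ 2 = (M * M.+1) %/ 2)%N); last by rewrite hsz.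
  rewrite (_ : ((size D).+1./2 * (size D).+1.-1./2 + (size D).+1./2 = M.+1./2 * M.+1.-1./2 + M.+1./2)%N); last by rewrite hsz.
  have := int_ident MI MII; rewrite /= -/M -/fM -/c => -[E1 _].
  rewrite -E1 expfzDr // -exprnP -exprnN.
  have ep : powR x (MII%:R * (2^-1 - g)) * powR x ((MI%:R + g + 2^-1) * MII%:R)
      = x ^+ ((MI + 1) * MII).
    rewrite -powRD; last by apply/implyP => _; rewrite gt_eqF.
    rewrite -powR_mulrn ?ltW //; congr (powR x _); rewrite natrM natrD; by field.
  rewrite expRN -ep.
  have En0 : expR (MI%:R * x) != 0 by rewrite gt_eqF // expR_gt0.
  have an0 : (2 : R) ^+ ((M * M.+1) %/ 2) != 0 by rewrite expf_neq0 // pnatr_eq0.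
  have bn0 : x ^+ (uphalf M * M./2 + uphalf M) != 0 by rewrite expf_neq0.
  move: En0 an0 bn0.
  move: (expR (MI%:R * x)) ((2 : R) ^+ ((M * M.+1) %/ 2)) (x ^+ (uphalf M * M./2 + uphalf M)) => E0 A0 B0 h1 h2 h3.
  by field; rewrite h1 h2 h3.
- have W := @assemble R (map (mu g) D) (size D) (bmat g D x) x (g - 2^-1)
     ak bk lamk Ek qk xik zk hx.
  rewrite /Xi W; first last.
  + move=> j k; rewrite /bmat mxE /Ek /zk /xik ltn_ord //.
  + by move=> k hk; rewrite Hz //; lia.
  + by move=> k hk; rewrite Hxi //; lia.
  + by move=> k hk; rewrite Hl //; lia.
  + by move=> k hk; rewrite HE //; lia.
  + move=> k hk; rewrite /ak /bk /qk hk.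
    by rewrite (nth_map (0%N, true)) // mu_Fg.
  + by rewrite size_map.
  rewrite row_prod // SS_closed Gs hI hII Dl.
  rewrite (_ : ((size D * (size D).-1) %/ 2 = (M * M.-1) %/ 2)%N); last by rewrite hsz.
  rewrite (_ : ((size D)./2 * (size D).-1./2 + (size D)./2 = M./2 * M.-1./2 + M./2)%N); last by rewrite hsz.
  have := int_ident MI MII; rewrite /= -/M -/fM -/c => -[_ E1].
  rewrite -E1 expfzDr // -exprnP -exprnN.
  have ep : powR x (MII%:R * (2^-1 - g)) * powR x ((MI%:R + g - 2^-1) * MII%:R)
      = x ^+ (MI * MII).
    rewrite -powRD; last by apply/implyP => _; rewrite gt_eqF.
    rewrite -powR_mulrn ?ltW //; congr (powR x _); rewrite natrM; by field.
  rewrite expRN -ep.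
  have En0 : expR (MI%:R * x) != 0 by rewrite gt_eqF // expR_gt0.
  have an0 : (2 : R) ^+ ((M * M.-1) %/ 2) != 0 by rewrite expf_neq0 // pnatr_eq0.
  have bn0 : x ^+ (M./2 * M.-1./2 + M./2) != 0 by rewrite expf_neq0.
  move: En0 an0 bn0.
  move: (expR (MI%:R * x)) ((2 : R) ^+ ((M * M.-1) %/ 2)) (x ^+ (M./2 * M.-1./2 + M./2)) => E0 A0 B0 h1 h2 h3.
  by field; rewrite h1 h2 h3.
Qed.
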